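(* Let $\Gamma=\operatorname{HNN}(G,H,\theta)$ be a non-ascending HNN extension. Then the normal closures in $\Gamma$ of the two quasi-kernels $K_{-1}$ and $K_1$ coincide.
   Context: Let $G$ be a group, $H\le G$ a subgroup and $\theta:H\to G$ an injective homomorphism; $\Gamma=\operatorname{HNN}(G,H,\theta)=\langle G,\tau\mid \tau^{-1}h\tau=\theta(h)\ (h\in H)\rangle$. Set $H_{-1}=H$, $H_1=\theta(H)$. The extension is non-ascending if $H\neq G$ and $\theta(H)\neq G$. Fix sets $S_{-1},S_1$ of representatives of the left cosets of $H_{-1}$, resp. $H_1$, in $G$ with $1\in S_{-1}\cap S_1$. Every $g\in\Gamma$ has a unique normal form $g=g_1\tau^{\varepsilon_1}g_2\tau^{\varepsilon_2}\cdots g_n\tau^{\varepsilon_n}g_{n+1}$ with $n\ge0$, $\varepsilon_i\in\{\pm1\}$, $g_i\in S_{-\varepsilon_i}$ for $1\le i\le n$, $g_{n+1}\in G$, and $g_i=1\Rightarrow\varepsilon_{i-1}=\varepsilon_i$ for $2\le i\le n$. Then $n$ is the length of $g$; if $n\ge1$, $\varepsilon_1$ is the type and $g_1$ the initial letter of $g$. For $\varepsilon\in\{\pm1\}$, $T_\varepsilon$ is the set of elements of length $\ge1$ and type $\varepsilon$, and $T_\varepsilon^\dagger\subseteq T_\varepsilon$ the subset of those with initial letter $1$. The quasi-kernels are $K_\varepsilon=\bigcap_{r\in\Gamma\setminus T_\varepsilon^\dagger} rHr^{-1}$. *)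

(* Defs.v *)
From Stdlib Require Import List.
Import ListNotations.

Record Group := {
  gcar :> Type;
  gmul : gcar -> gcar -> gcar;
  ginv : gcar -> gcar;
  gone : gcar;
  gmul_assoc : forall x y z, gmul x (gmul y z) = gmul (gmul x y) z;
  gmul_1l : forall x, gmul gone x = x;
  gmul_Vl : forall x, gmul (ginv x) x = gone
}.

Arguments gmul {g} _ _.
Arguments ginv {g} _.
Arguments gone {g}.

Definition is_hom {A B : Group} (f : A -> B) : Prop :=
  forall x y, f (gmul x y) = gmul (f x) (f y).

Definition is_subgroup {A : Group} (P : A -> Prop) : Prop :=
  P gone /\ (forall x y, P x -> P y -> P (gmul x y)) /\ (forall x, P x -> P (ginv x)).

Definition is_normal_subgroup {A : Group} (P : A -> Prop) : Prop :=
  is_subgroup P /\ (forall x g, P x -> P (gmul g (gmul x (ginv g)))).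

Definition normal_closure {A : Group} (S : A -> Prop) (x : A) : Prop :=
  forall N : A -> Prop, is_normal_subgroup N -> (forall y, S y -> N y) -> N x.

(* theta : H -> G injective homomorphism (theta given as a function on G,
   only its restriction to H matters) *)
Definition is_inj_hom_on {G : Group} (H : G -> Prop) (theta : G -> G) : Prop :=
  (forall x y, H x -> H y -> theta (gmul x y) = gmul (theta x) (theta y)) /\
  (forall x y, H x -> H y -> theta x = theta y -> x = y).

Definition image_on {G : Group} (H : G -> Prop) (theta : G -> G) (g : G) : Prop :=
  exists h, H h /\ theta h = g.

(* Gamma together with iota : G -> Gamma and tau is HNN(G,H,theta):
   universal property of the presentation <G, tau | tau^-1 h tau = theta h (h in H)>. *)
Definition is_HNN (G : Group) (H : G -> Prop) (theta : G -> G)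
    (Gam : Group) (iota : G -> Gam) (tau : Gam) : Prop :=
  is_hom iota /\
  (forall h, H h -> gmul (ginv tau) (gmul (iota h) tau) = iota (theta h)) /\
  (forall (X : Group) (f : G -> X) (t : X),
     is_hom f ->
     (forall h, H h -> gmul (ginv t) (gmul (f h) t) = f (theta h)) ->
     (exists F : Gam -> X, is_hom F /\ (forall g, F (iota g) = f g) /\ F tau = t) /\
     (forall F1 F2 : Gam -> X, is_hom F1 -> is_hom F2 ->
        (forall g, F1 (iota g) = F2 (iota g)) -> F1 tau = F2 tau ->
        forall x, F1 x = F2 x)).

Definition left_transversal {G : Group} (K : G -> Prop) (S : G -> Prop) : Prop :=
  S gone /\
  (forall g, exists s, S s /\ K (gmul (ginv s) g)) /\
  (forall s s', S s -> S s' -> K (gmul (ginv s) s') -> s = s').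

Inductive sgn := Neg | Pos.

Definition tpow {Gam : Group} (tau : Gam) (e : sgn) : Gam :=
  match e with Pos => tau | Neg => ginv tau end.

Fixpoint nf_prod {G Gam : Group} (iota : G -> Gam) (tau : Gam)
    (l : list (G * sgn)) (last : G) : Gam :=
  match l with
  | [] => iota last
  | (a, e) :: l' => gmul (iota a) (gmul (tpow tau e) (nf_prod iota tau l' last))
  end.

(* normal form conditions: g_i in S_{-e_i}; g_i = 1 -> e_{i-1} = e_i (i >= 2).
   Sm = S_{-1} (reps of H = H_{-1}), Sp = S_1 (reps of theta(H) = H_1). *)
Fixpoint nf_ok {G : Group} (Sm Sp : G -> Prop) (prev : option sgn)
    (l : list (G * sgn)) : Prop :=
  match l with
  | [] => True
  | (a, e) :: l' =>
      (match e with Pos => Sm a | Neg => Sp a end) /\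
      (a = gone -> match prev with None => True | Some p => p = e end) /\
      nf_ok Sm Sp (Some e) l'
  end.

Definition Tdag {G Gam : Group} (Sm Sp : G -> Prop) (iota : G -> Gam) (tau : Gam)
    (e : sgn) (x : Gam) : Prop :=
  exists (l : list (G * sgn)) (last : G),
    nf_ok Sm Sp None ((gone, e) :: l) /\ x = nf_prod iota tau ((gone, e) :: l) last.

Definition quasi_kernel {G Gam : Group} (H : G -> Prop) (Sm Sp : G -> Prop)
    (iota : G -> Gam) (tau : Gam) (e : sgn) (x : Gam) : Prop :=
  forall r : Gam, ~ Tdag Sm Sp iota tau e r ->
    exists h, H h /\ x = gmul r (gmul (iota h) (ginv r)).

(* Main.v *)
From Stdlib Require Import List.
Import ListNotations.
Require Import Defs.

Lemma gmulVr {G : Group} (x : G) : gmul x (ginv x) = gone.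
Proof.
  rewrite <- (gmul_1l G (gmul x (ginv x))).
  rewrite <- (gmul_Vl G (ginv x)) at 1.
  rewrite <- (gmul_assoc G (ginv (ginv x))).
  rewrite (gmul_assoc G (ginv x) x (ginv x)), gmul_Vl, gmul_1l.
  apply gmul_Vl.
Qed.

Lemma gmul1r {G : Group} (x : G) : gmul x gone = x.
Proof. rewrite <- (gmul_Vl G x), gmul_assoc, gmulVr, gmul_1l. reflexivity. Qed.

Lemma gmulKl {G : Group} (x y : G) : gmul (ginv x) (gmul x y) = y.
Proof. rewrite gmul_assoc, gmul_Vl, gmul_1l. reflexivity. Qed.

Lemma gmulKr {G : Group} (x y : G) : gmul x (gmul (ginv x) y) = y.
Proof. rewrite gmul_assoc, gmulVr, gmul_1l. reflexivity. Qed.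

Lemma inv_uniq {G : Group} (x y : G) : gmul y x = gone -> y = ginv x.
Proof.
  intro E. rewrite <- (gmul1r y), <- (gmulVr x), gmul_assoc, E, gmul_1l. reflexivity.
Qed.

Lemma ginvK {G : Group} (x : G) : ginv (ginv x) = x.
Proof. symmetry. apply inv_uniq. apply gmulVr. Qed.

Lemma ginvM {G : Group} (x y : G) : ginv (gmul x y) = gmul (ginv y) (ginv x).
Proof.
  symmetry. apply inv_uniq.
  rewrite <- gmul_assoc, (gmul_assoc G (ginv x)), gmul_Vl, gmul_1l, gmul_Vl. reflexivity.
Qed.

Lemma ginv1 {G : Group} : ginv (@gone G) = gone.
Proof. symmetry. apply inv_uniq. apply gmul_1l. Qed.

Lemma idem1 {G : Group} (x : G) : gmul x x = x -> x = gone.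
Proof. intro E. rewrite <- (gmulKl x x), E. apply gmul_Vl. Qed.

Lemma hom1 {A B : Group} (f : A -> B) : is_hom f -> f gone = gone.
Proof. intro Hf. apply idem1. rewrite <- Hf, gmul_1l. reflexivity. Qed.

Lemma homV {A B : Group} (f : A -> B) : is_hom f -> forall x, f (ginv x) = ginv (f x).
Proof. intros Hf x. apply inv_uniq. rewrite <- Hf, gmul_Vl. apply hom1; auto. Qed.

Definition neg (e : sgn) := match e with Pos => Neg | Neg => Pos end.

Definition Qs {G : Group} (H : G -> Prop) (theta : G -> G) (e : sgn) : G -> Prop :=
  match e with Pos => H | Neg => image_on H theta end.

Definition Trs {G : Group} (Sm Sp : G -> Prop) (e : sgn) : G -> Prop :=
  match e with Pos => Sm | Neg => Sp end.

Lemma Qs_sub {G : Group} (H : G -> Prop) (theta : G -> G) :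
  is_subgroup H -> is_inj_hom_on H theta -> forall e, is_subgroup (Qs H theta e).
Proof.
  intros [H1 [HM HV]] [Th _] [|]; simpl; [|split; auto].
  assert (T1 : theta gone = gone).
  { apply idem1. rewrite <- Th by auto. rewrite gmul_1l. reflexivity. }
  split; [|split].
  - exists gone. auto.
  - intros x y [a [Ha <-]] [b [Hb <-]]. exists (gmul a b). split; auto.
  - intros x [a [Ha <-]]. exists (ginv a). split; auto.
    apply inv_uniq. rewrite <- Th by auto. rewrite gmul_Vl. exact T1.
Qed.
Definition sgn_eq_dec (a b : sgn) : {a = b} + {a <> b}.
Proof. decide equality. Defined.

Lemma tpow_neg {Gam : Group} (tau : Gam) e : tpow tau (neg e) = ginv (tpow tau e).
Proof. destruct e; simpl; [symmetry; apply ginvK|reflexivity]. Qed.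

Lemma Trs_trans {G : Group} (H : G -> Prop) theta Sm Sp :
  left_transversal H Sm -> left_transversal (image_on H theta) Sp ->
  forall e, left_transversal (Qs H theta e) (Trs Sm Sp e).
Proof. intros A B [|]; assumption. Qed.

Lemma pass {G Gam : Group} (H : G -> Prop) theta (iota : G -> Gam) tau :
  (forall h, H h -> gmul (ginv tau) (gmul (iota h) tau) = iota (theta h)) ->
  forall e q, Qs H theta e q -> exists q', Qs H theta (neg e) q' /\
    forall z, gmul (iota q) (gmul (tpow tau e) z) = gmul (tpow tau e) (gmul (iota q') z).
Proof.
  intros Hrel [|] q Hq; simpl in *.
  - destruct Hq as [h [Hh <-]]. exists h. split; auto. intro z.
    rewrite <- Hrel by auto.
    rewrite <- !gmul_assoc, gmulKr. reflexivity.
  - exists (theta q). split; [exists q; auto|]. intro z.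
    rewrite <- Hrel by auto. rewrite !gmul_assoc, gmulVr, gmul_1l. reflexivity.
Qed.

Lemma nf_head {G : Group} Sm Sp (a : G) e :
  (match e with Pos => Sm a | Neg => Sp a end) <-> Trs Sm Sp e a.
Proof. destruct e; reflexivity. Qed.

Lemma renorm (G Gam : Group) (H : G -> Prop) theta (iota : G -> Gam) tau Sm Sp :
  is_subgroup H -> is_inj_hom_on H theta -> is_hom iota ->
  (forall h, H h -> gmul (ginv tau) (gmul (iota h) tau) = iota (theta h)) ->
  left_transversal H Sm -> left_transversal (image_on H theta) Sp ->
  forall l p last c, nf_ok Sm Sp p l ->
  (forall a e l', l = (a,e)::l' -> forall p', p = Some p' -> p' <> e -> Qs H theta e c) ->
  exists l2 last2, nf_ok Sm Sp p l2 /\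
    gmul (iota c) (nf_prod iota tau l last) = nf_prod iota tau l2 last2.
Proof.
  intros HS Hth Hi Hrel TM TP.
  induction l as [|[a e] l IH]; intros p last c Hok Hc.
  - exists nil, (gmul c last). split; [exact I|]. simpl. symmetry. apply Hi.
  - destruct Hok as [Ha [Ha1 Hok]].
    destruct (Trs_trans H theta Sm Sp TM TP e) as [T1 [Tex Tun]].
    destruct (Qs_sub H theta HS Hth e) as [Q1 [QM QV]].
    destruct (Tex (gmul c a)) as [s [Hs Hq]].
    destruct (pass H theta iota tau Hrel e _ Hq) as [q' [Hq' Hpass]].
    destruct (IH (Some e) last q' Hok) as [l2 [last2 [Hok2 Heq2]]].
    { intros a' e' l' E p' Ep Ne. injection Ep as <-. destruct e, e'; simpl in *;
      try (exfalso; apply Ne; reflexivity); exact Hq'. }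
    exists ((s, e) :: l2), last2. split.
    + split; [apply nf_head; exact Hs|]. split; [|exact Hok2].
      intro s1. destruct p as [p'|]; [|exact I].
      destruct (sgn_eq_dec p' e) as [E|Ne]; [exact E|].
      exfalso.
      assert (Qc := Hc a e l eq_refl p' eq_refl Ne).
      assert (a = gone).
      { symmetry. apply Tun; [exact T1| apply nf_head; exact Ha|].
        rewrite ginv1, gmul_1l.
        rewrite s1, ginv1, gmul_1l in Hq.
        rewrite <- (gmulKl c a). apply QM; auto. }
      apply Ne. exact (Ha1 H0).
    + simpl. rewrite gmul_assoc, <- Hi.
      rewrite <- (gmulKr s (gmul c a)), Hi, <- gmul_assoc, Hpass, Heq2. reflexivity.
Qed.

Lemma shift (G Gam : Group) (H : G -> Prop) theta (iota : G -> Gam) tau Sm Sp :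
  is_subgroup H -> is_inj_hom_on H theta -> is_hom iota ->
  (forall h, H h -> gmul (ginv tau) (gmul (iota h) tau) = iota (theta h)) ->
  left_transversal H Sm -> left_transversal (image_on H theta) Sp ->
  forall e g r, ~ Qs H theta e g ->
  Tdag Sm Sp iota tau e (gmul (gmul (iota g) (tpow tau e)) r) ->
  Tdag Sm Sp iota tau (neg e) r.
Proof.
  intros HS Hth Hi Hrel TM TP e g r Hg [l [last [Hok Heq]]].
  destruct Hok as [_ [_ Hok]].
  destruct (Trs_trans H theta Sm Sp TM TP e) as [T1 [Tex Tun]].
  destruct (Trs_trans H theta Sm Sp TM TP (neg e)) as [T1' _].
  destruct (Qs_sub H theta HS Hth e) as [Q1 [QM QV]].
  destruct (Tex (ginv g)) as [s [Hs Hq]].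
  destruct (pass H theta iota tau Hrel e _ Hq) as [q' [Hq' Hpass]].
  destruct (renorm G Gam H theta iota tau Sm Sp HS Hth Hi Hrel TM TP l (Some e) last q' Hok)
    as [l2 [last2 [Hok2 Heq2]]].
  { intros a' e' l' E p' Ep Ne. injection Ep as <-. destruct e, e'; simpl in *;
      try (exfalso; apply Ne; reflexivity); exact Hq'. }
  exists ((s, e) :: l2), last2. split.
  - split; [apply nf_head; exact T1'|]. split; [intros; exact I|].
    split; [apply nf_head; exact Hs|]. split; [|exact Hok2].
    intro s1. exfalso. apply Hg. rewrite s1, ginv1, gmul_1l in Hq.
    rewrite <- (ginvK g). apply QV. exact Hq.
  - simpl. rewrite (hom1 iota Hi), gmul_1l. 
    rewrite <- Heq2, <- Hpass, (gmul_assoc _ (iota s)), <- Hi, gmulKr.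
    rewrite <- (gmulKl (gmul (iota g) (tpow tau e)) r), Heq.
    simpl. rewrite (hom1 iota Hi), gmul_1l, ginvM, <- gmul_assoc, (homV iota Hi).
    rewrite tpow_neg. reflexivity.
Qed.

Lemma qk_conj (G Gam : Group) (H : G -> Prop) theta (iota : G -> Gam) tau Sm Sp :
  is_subgroup H -> is_inj_hom_on H theta -> is_hom iota ->
  (forall h, H h -> gmul (ginv tau) (gmul (iota h) tau) = iota (theta h)) ->
  left_transversal H Sm -> left_transversal (image_on H theta) Sp ->
  forall e g y, ~ Qs H theta e g ->
  quasi_kernel H Sm Sp iota tau e y ->
  quasi_kernel H Sm Sp iota tau (neg e)
    (gmul (ginv (gmul (iota g) (tpow tau e))) (gmul y (gmul (iota g) (tpow tau e)))).
Proof.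
  intros HS Hth Hi Hrel TM TP e g y Hg Hy r Hr.
  set (a := gmul (iota g) (tpow tau e)).
  destruct (Hy (gmul a r)) as [h [Hh E]].
  { intro T. apply Hr. exact (shift G Gam H theta iota tau Sm Sp HS Hth Hi Hrel TM TP e g r Hg T). }
  exists h. split; auto. rewrite E, ginvM, <- !gmul_assoc.
  rewrite gmul_Vl, gmul1r, (gmul_assoc _ (ginv a) a), gmul_Vl, gmul_1l. reflexivity.
Qed.

Lemma ncl_step (G Gam : Group) (H : G -> Prop) theta (iota : G -> Gam) tau Sm Sp :
  is_subgroup H -> is_inj_hom_on H theta -> is_hom iota ->
  (forall h, H h -> gmul (ginv tau) (gmul (iota h) tau) = iota (theta h)) ->
  left_transversal H Sm -> left_transversal (image_on H theta) Sp ->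
  forall e g, ~ Qs H theta e g ->
  forall N : Gam -> Prop, is_normal_subgroup N ->
  (forall y, quasi_kernel H Sm Sp iota tau (neg e) y -> N y) ->
  forall y, quasi_kernel H Sm Sp iota tau e y -> N y.
Proof.
  intros HS Hth Hi Hrel TM TP e g Hg N [_ HN] HK y Hy.
  set (a := gmul (iota g) (tpow tau e)).
  assert (Nz := HK _ (qk_conj G Gam H theta iota tau Sm Sp HS Hth Hi Hrel TM TP e g y Hg Hy)).
  fold a in Nz.
  assert (E : y = gmul a (gmul (gmul (ginv a) (gmul y a)) (ginv a))).
  { rewrite <- !gmul_assoc, gmulKr, gmulVr, gmul1r. reflexivity. }
  rewrite E. apply HN. exact Nz.
Qed.

Theorem mainTheorem12 (G : Group) (H : G -> Prop) (theta : G -> G)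
    (Gam : Group) (iota : G -> Gam) (tau : Gam) (Sm Sp : G -> Prop) :
  is_subgroup H ->
  is_inj_hom_on H theta ->
  is_HNN G H theta Gam iota tau ->
  (exists g, ~ H g) ->
  (exists g, ~ image_on H theta g) ->
  left_transversal H Sm ->
  left_transversal (image_on H theta) Sp ->
  forall x : Gam,
    normal_closure (quasi_kernel H Sm Sp iota tau Neg) x <->
    normal_closure (quasi_kernel H Sm Sp iota tau Pos) x.
Proof.
  intros HS Hth [Hi [Hrel _]] [g1 Hg1] [g2 Hg2] TM TP x.
  split; intros Hx N HN HK; apply Hx; auto.
  - exact (ncl_step G Gam H theta iota tau Sm Sp HS Hth Hi Hrel TM TP Neg g2 Hg2 N HN HK).
  - exact (ncl_step G Gam H theta iota tau Sm Sp HS Hth Hi Hrel TM TP Pos g1 Hg1 N HN HK).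
Qed.
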